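(* Let $k\geq 2$ and define $f(x,y)=(x+y)^{2}x^{2}-\left(x+\frac{y}{2}\right)^{2}(2x+y-2)$. If $k\leq x\leq k+(2k-1)^{2}$ and $0\leq y\leq (2k-1)^{2}$, then $f(x,y)>0$.
   Context: Here $x,y$ are real numbers. *)

(* Defs.v *)
From Stdlib Require Import Reals Lra.
Open Scope R_scope.

Definition f33 (x y : R) : R :=
  (x + y) ^ 2 * x ^ 2 - (x + y / 2) ^ 2 * (2 * x + y - 2).

(* Main.v *)
Require Import Defs.
From Stdlib Require Import Reals Lra Psatz.
Open Scope R_scope.

Lemma fY x : 2 <= x -> let y := (2*x-1)^2 in
 (x + y) ^ 2 * x ^ 2 - (x + y / 2) ^ 2 * (2 * x + y - 2) > 0.
Proof.
intros H y. unfold y.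
assert (H1: 0 <= x - 2) by lra.
assert (H2: 0 <= (x-2)^2) by nra.
nra.
Qed.

Lemma main2 x y : 2 <= x -> 0 <= y -> y <= (2*x-1)^2 -> f33 x y > 0.
Proof.
intros Hx Hy HY.
set (Y := (2*x-1)^2) in *.
assert (HfY := fY x Hx). cbv zeta in HfY. fold Y in HfY.
set (c0 := x^4-2*x^3+2*x^2).
set (c1 := 2*x^3-3*x^2+2*x).
set (c2 := x^2 - 3*x/2 + 1/2).
assert (Ef : forall z, (x + z) ^ 2 * x ^ 2 - (x + z / 2) ^ 2 * (2 * x + z - 2)
   = c0 + c1*z + c2*z^2 - z^3/4) by (intros; unfold c0,c1,c2; field).
unfold f33. rewrite Ef. rewrite Ef in HfY.
assert (c0 > 0) by (unfold c0; nra).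
assert (c1 >= 0) by (unfold c1; nra).
assert (c2 >= 0) by (unfold c2; nra).
assert (HYp : Y > 0) by (unfold Y; nra).
assert (Hyy : y^3 <= Y^3) by (apply pow_incr; lra).
assert (Hy2 : y^2 <= Y^2) by (apply pow_incr; lra).
assert (Key : Y^3 * (c0 + c1*y + c2*y^2 - y^3/4) =
   c0*(Y^3-y^3) + c1*y*Y*(Y^2-y^2) + c2*y^2*Y^2*(Y-y) + y^3*(c0 + c1*Y + c2*Y^2 - Y^3/4)) by field.
assert (T1 : 0 <= c1*y*Y*(Y^2-y^2)).
{ apply Rmult_le_pos; [|lra]. apply Rmult_le_pos; [|lra]. apply Rmult_le_pos; lra. }
assert (T2 : 0 <= c2*y^2*Y^2*(Y-y)).
{ apply Rmult_le_pos; [|lra]. apply Rmult_le_pos; [|apply pow_le; lra].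
  apply Rmult_le_pos; [lra|apply pow_le; lra]. }
assert (T3 : 0 <= y^3*(c0 + c1*Y + c2*Y^2 - Y^3/4)).
{ apply Rmult_le_pos; [apply pow_le; lra|lra]. }
assert (HY3 : Y^3 > 0) by (apply pow_lt; lra).
destruct (Rle_lt_or_eq_dec y Y HY) as [Hlt|Heq].
- assert (y^3 < Y^3) by (assert (Y^3 - y^3 = (Y-y)*(Y^2+Y*y+y^2)) by ring; assert (0 < (Y-y)*(Y^2+Y*y+y^2)) by (apply Rmult_lt_0_compat; nra); lra).
  assert (0 < c0*(Y^3-y^3)) by (apply Rmult_lt_0_compat; lra).
  assert (0 < Y^3 * (c0 + c1*y + c2*y^2 - y^3/4)) by lra.
  apply Rlt_gt. apply (Rmult_lt_reg_l (Y^3)); lra.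
- subst y. exact HfY.
Qed.

Theorem lemma3p3 (k : nat) (x y : R) :
  (2 <= k)%nat ->
  INR k <= x -> x <= INR k + (2 * INR k - 1) ^ 2 ->
  0 <= y -> y <= (2 * INR k - 1) ^ 2 ->
  f33 x y > 0.
Proof.
intros Hk H1 H2 H3 H4.
assert (HK : 2 <= INR k) by (apply (le_INR 2 k) in Hk; simpl in Hk; lra).
apply main2; try lra.
assert (2*INR k - 1 <= 2*x-1) by lra.
apply Rle_trans with ((2 * INR k - 1) ^ 2); auto.
apply pow_incr; lra.
Qed.
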